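(* Two proper subspaces $W_1,W_2$ of $\mathbb{R}^N$ do norm retrieval if and only if they are orthogonal complements of each other, i.e. $W_2=W_1^\perp$.
   Context: A family of subspaces $\{W_i\}_{i=1}^M$ of $\mathbb{R}^N$ with orthogonal projections $\{P_i\}_{i=1}^M$ does norm retrieval if for all $x,y\in\mathbb{R}^N$, $\|P_ix\|=\|P_iy\|$ for all $i\in\{1,\dots,M\}$ implies $\|x\|=\|y\|$. A proper subspace is a subspace different from $\mathbb{R}^N$. *)

(* Defs.v *)
(* R^N is modelled as row vectors 'rV[R]_N over an
   arbitrary R : realType (the real numbers).  A subspace of R^N is the
   row space of a square matrix W : 'M[R]_N (mxalgebra convention). *)
From HB Require Import structures.
From mathcomp Require Import all_boot all_order all_algebra.
From mathcomp Require Import reals.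
Set Implicit Arguments. Unset Strict Implicit. Unset Printing Implicit Defensive.
Import Order.TTheory GRing.Theory Num.Theory.
Local Open Scope ring_scope.

Definition dotv (R : realType) (N : nat) (u v : 'rV[R]_N) : R :=
  (u *m v^T) 0 0.
Definition normv (R : realType) (N : nat) (u : 'rV[R]_N) : R :=
  Num.sqrt (dotv u u).

Definition orthproj (R : realType) (N : nat) (W : 'M[R]_N) (x : 'rV[R]_N)
  : 'rV[R]_N :=
  let B := row_base W in x *m B^T *m invmx (B *m B^T) *m B.

Definition orthcomp (R : realType) (N : nat) (W : 'M[R]_N) : 'M[R]_N :=
  kermx W^T.

Definition proper_subspace (R : realType) (N : nat) (W : 'M[R]_N) : bool :=
  ~~ row_full W.

Definition norm_retrieval (R : realType) (N : nat) (I : Type)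
  (W : I -> 'M[R]_N) : Prop :=
  forall x y : 'rV[R]_N,
    (forall i, normv (orthproj (W i) x) = normv (orthproj (W i) y)) ->
    normv x = normv y.

(* Main.v *)
Require Import Defs.
From HB Require Import structures.
From mathcomp Require Import all_boot all_order all_algebra.
From mathcomp Require Import reals.
From mathcomp Require Import lra.
Import Order.TTheory GRing.Theory Num.Theory.
Local Open Scope ring_scope.
Set Implicit Arguments. Unset Strict Implicit. Unset Printing Implicit Defensive.

Section Aux.
Variables (R : realType) (N : nat).
Implicit Types (x y z : 'rV[R]_N) (W : 'M[R]_N).

Lemma dotvE x y : dotv x y = \sum_j x 0 j * y 0 j.
Proof. by rewrite /dotv mxE; apply: eq_bigr => j _; rewrite mxE. Qed.

Lemma dotvC x y : dotv x y = dotv y x.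
Proof. by rewrite !dotvE; apply: eq_bigr => j _; rewrite mulrC. Qed.

Lemma dotvDl x y z : dotv (x + y) z = dotv x z + dotv y z.
Proof. by rewrite !dotvE -big_split; apply: eq_bigr => j _; rewrite !mxE mulrDl. Qed.

Lemma dotvDr x y z : dotv z (x + y) = dotv z x + dotv z y.
Proof. by rewrite dotvC dotvDl !(dotvC z). Qed.

Lemma dotvNl x y : dotv (- x) y = - dotv x y.
Proof. by rewrite !dotvE -sumrN; apply: eq_bigr => j _; rewrite !mxE mulNr. Qed.

Lemma dotvNr x y : dotv y (- x) = - dotv y x.
Proof. by rewrite dotvC dotvNl dotvC. Qed.

Lemma dotvZl (c : R) x y : dotv (c *: x) y = c * dotv x y.
Proof. by rewrite !dotvE mulr_sumr; apply: eq_bigr => j _; rewrite !mxE mulrA. Qed.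

Lemma dotvZr (c : R) x y : dotv y (c *: x) = c * dotv y x.
Proof. by rewrite dotvC dotvZl dotvC. Qed.

Lemma dotv_ge0 x : 0 <= dotv x x.
Proof. by rewrite dotvE; apply: sumr_ge0 => j _; rewrite -expr2 sqr_ge0. Qed.

Lemma dotv_eq0 x : dotv x x = 0 -> x = 0.
Proof.
rewrite dotvE => /eqP; rewrite psumr_eq0; last by move=> j _; rewrite -expr2 sqr_ge0.
move=> /allP H; apply/rowP => j; rewrite mxE.
by have := H j (mem_index_enum j); rewrite /= mulf_eq0 orbb => /eqP.
Qed.

Lemma normv_eq x y : dotv x x = dotv y y -> normv x = normv y.
Proof. by rewrite /normv => ->. Qed.

Lemma normv_eqE x y : normv x = normv y -> dotv x x = dotv y y.
Proof.
move=> H; rewrite -(sqr_sqrtr (dotv_ge0 x)) -(sqr_sqrtr (dotv_ge0 y)).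
by move: H; rewrite /normv => ->.
Qed.

Lemma dot_ortho x y W : x *m W^T = 0 -> (y <= W)%MS -> dotv x y = 0.
Proof.
move=> Hx /submxP [D ->]; by rewrite /dotv trmx_mul mulmxA Hx mul0mx mxE.
Qed.

Lemma ortho_sub x k (W : 'M[R]_(k,N)) m (V : 'M[R]_(m,N)) : x *m W^T = 0 -> (V <= W)%MS -> x *m V^T = 0.
Proof. by move=> Hx /submxP [D ->]; rewrite trmx_mul mulmxA Hx mul0mx. Qed.

Lemma ortho_in x W : x *m W^T = 0 -> (x <= W)%MS -> x = 0.
Proof. by move=> H1 H2; apply: dotv_eq0; apply: (dot_ortho H1 H2). Qed.

Definition Gm W := let B := row_base W in B *m B^T.

Lemma Gm_unit W : Gm W \in unitmx.
Proof.
rewrite -row_free_unit -kermx_eq0; apply/eqP/row_matrixP => i.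
rewrite row0; set u := row i _.
have Hu : u *m Gm W = 0 by rewrite /u -row_mul mulmx_ker row0.
have HuB : u *m row_base W = 0.
  have H2 : u *m row_base W *m (row_base W)^T = 0 by rewrite -mulmxA.
  by apply: dotv_eq0; rewrite /dotv trmx_mul mulmxA H2 mul0mx mxE.
have := row_free_inj (row_base_free W) (x1 := u) (x2 := 0).
by rewrite /= HuB mul0mx => ->.
Qed.

Lemma orthprojE W x : orthproj W x = x *m ((row_base W)^T *m invmx (Gm W) *m row_base W).
Proof. by rewrite /orthproj !mulmxA. Qed.

Lemma orthprojD W x y : orthproj W (x + y) = orthproj W x + orthproj W y.
Proof. by rewrite !orthprojE mulmxDl. Qed.

Lemma orthprojN W x : orthproj W (- x) = - orthproj W x.
Proof. by rewrite !orthprojE mulNmx. Qed.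

Lemma orthprojZ W (c : R) x : orthproj W (c *: x) = c *: orthproj W x.
Proof. by rewrite !orthprojE scalemxAl. Qed.

Lemma orthproj_sub W x : (orthproj W x <= W)%MS.
Proof. by rewrite /orthproj (submx_trans (submxMl _ _)) // eq_row_base. Qed.

Lemma orthproj_in W x : (x <= W)%MS -> orthproj W x = x.
Proof.
rewrite -(eq_row_base W) => /submxP [D ->].
have GV : row_base W *m (row_base W)^T *m invmx (Gm W) = 1%:M.
  by rewrite mulmxV ?Gm_unit.
rewrite /orthproj.
have -> : D *m row_base W *m (row_base W)^T *m invmx (Gm W)
   = D *m (row_base W *m (row_base W)^T *m invmx (Gm W)) by rewrite !mulmxA.
by rewrite GV mulmx1.
Qed.

Lemma orthproj_ortho0 W x : x *m W^T = 0 -> orthproj W x = 0.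
Proof.
move=> Hx; rewrite /orthproj (ortho_sub (V := row_base W) Hx) ?mul0mx //.
by rewrite eq_row_base.
Qed.

Lemma orthproj_res W x : (x - orthproj W x) *m W^T = 0.
Proof.
apply: (ortho_sub (W := row_base W)); last by rewrite eq_row_base.
have GV : invmx (Gm W) *m (row_base W *m (row_base W)^T) = 1%:M.
  by rewrite mulVmx ?Gm_unit.
rewrite mulmxBl /orthproj.
have -> : x *m (row_base W)^T *m invmx (Gm W) *m row_base W *m (row_base W)^T
   = x *m (row_base W)^T *m (invmx (Gm W) *m (row_base W *m (row_base W)^T)) by rewrite !mulmxA.
by rewrite GV mulmx1 subrr.
Qed.

End Aux.
Section Main.
Variables (R : realType) (N : nat).
Implicit Types (x y z : 'rV[R]_N) (A B : 'M[R]_N).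

Definition NRd (A B : 'M[R]_N) := forall x y,
  dotv (orthproj A x) (orthproj A x) = dotv (orthproj A y) (orthproj A y) ->
  dotv (orthproj B x) (orthproj B x) = dotv (orthproj B y) (orthproj B y) ->
  dotv x x = dotv y y.

Lemma NRd_sym A B : NRd A B -> NRd B A.
Proof. by move=> H x y h1 h2; apply: H. Qed.

Lemma dotvNN x : dotv (- x) (- x) = dotv x x.
Proof. by rewrite dotvNl dotvNr opprK. Qed.

Lemma c_lem A B : NRd A B -> forall e f, e *m A^T = 0 -> f *m B^T = 0 -> dotv e f = 0.
Proof.
move=> NR e f He Hf.
have := NR (e + f) (e - f).
rewrite !orthprojD !orthprojN (orthproj_ortho0 He) (orthproj_ortho0 Hf).
rewrite !add0r !addr0 oppr0 addr0 dotvNN => /(_ erefl erefl).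
rewrite !dotvDl !dotvDr !dotvNl !dotvNr opprK (dotvC f e) => H.
lra.
Qed.

Lemma b_lem A B : NRd A B -> forall u : 'rV[R]_N, u *m A^T = 0 -> (u <= B)%MS.
Proof.
move=> NR u Hu.
set r := u - orthproj B u.
have Hr : r *m B^T = 0 by apply: orthproj_res.
have h1 : dotv u r = 0 by apply: (c_lem NR).
have h2 : dotv (orthproj B u) r = 0.
  by rewrite dotvC; apply: (dot_ortho Hr); apply: orthproj_sub.
have : dotv r r = 0 by rewrite {1}/r dotvDl dotvNl h1 h2 subrr.
move/dotv_eq0 => /eqP; rewrite /r subr_eq0 => /eqP ->.
exact: orthproj_sub.
Qed.

Lemma exists_perp (W : 'M[R]_N) : ~~ row_full W -> exists e : 'rV[R]_N, e *m W^T = 0 /\ e != 0.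
Proof.
rewrite /row_full => HW.
set K := kermx W^T.
have HK : K != 0.
  rewrite -mxrank_eq0 /K mxrank_ker mxrank_tr.
  have HW2 := rank_leq_col W.
  by rewrite subn_eq0 -ltnNge ltn_neqAle HW HW2.
case: (pickP (fun i => row i K != 0)) => [i Hi | H0].
  by exists (row i K); split => //; rewrite -row_mul mulmx_ker row0.
exfalso; move/negP: HK; apply; apply/eqP/row_matrixP => i.
by rewrite row0; move: (H0 i) => /= /negbFE /eqP.
Qed.

Lemma normalize (W : 'M[R]_N) (e : 'rV[R]_N) z : e *m W^T = 0 -> e != 0 ->
  exists e' : 'rV[R]_N, e' *m W^T = 0 /\ dotv e' e' = dotv z z.
Proof.
move=> He Hne.
have Hpos : dotv e e != 0 by apply/eqP => /dotv_eq0 /eqP; apply/negP.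
set c := Num.sqrt (dotv z z / dotv e e).
exists (c *: e); split; first by rewrite -scalemxAl He scaler0.
rewrite dotvZl dotvZr mulrA -expr2 sqr_sqrtr.
  by rewrite mulfVK.
by rewrite divr_ge0 // dotv_ge0.
Qed.

Lemma z_lem A B : NRd A B -> ~~ row_full A -> ~~ row_full B ->
  forall z, (z <= A)%MS -> (z <= B)%MS -> z = 0.
Proof.
move=> NR pA pB z zA zB.
have [e0 [He0 Hne0]] := exists_perp pA.
have [f0 [Hf0 Hnf0]] := exists_perp pB.
have [e [He Hee]] := normalize z He0 Hne0.
have [f [Hf Hff]] := normalize z Hf0 Hnf0.
have eB : (e <= B)%MS by apply: (b_lem NR).
have fA : (f <= A)%MS by apply: (b_lem (NRd_sym NR)).
have ef : dotv e f = 0 by apply: (c_lem NR).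
have := NR (e + f) z.
rewrite !orthprojD (orthproj_ortho0 He) (orthproj_ortho0 Hf) (orthproj_in zA)
  (orthproj_in zB) (orthproj_in fA) (orthproj_in eB) add0r addr0.
move=> /(_ Hff Hee).
rewrite !dotvDl !dotvDr (dotvC f e) ef Hee Hff => H.
by apply: dotv_eq0; lra.
Qed.

Lemma a_lem A B : NRd A B -> ~~ row_full A -> ~~ row_full B ->
  forall w : 'rV[R]_N, (w <= A)%MS -> w *m B^T = 0.
Proof.
move=> NR pA pB w wA.
set r := w - orthproj B w.
have Hr : r *m B^T = 0 by apply: orthproj_res.
have rA : (r <= A)%MS by apply: (b_lem (NRd_sym NR)).
have vA : (orthproj B w <= A)%MS.
  have -> : orthproj B w = w + - r by rewrite /r opprB addrC subrK.
  by apply: addmx_sub => //; rewrite eqmx_opp.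
have v0 := z_lem NR pA pB vA (orthproj_sub B w).
by move: Hr; rewrite /r v0 subr0.
Qed.

Lemma fwd A B : NRd A B -> ~~ row_full A -> ~~ row_full B -> (B == kermx A^T)%MS.
Proof.
move=> NR pA pB; apply/andP; split.
  apply/sub_kermxP.
  have H : A *m B^T = 0.
    apply/row_matrixP => i; rewrite row_mul row0.
    by apply: (a_lem NR pA pB); apply: row_sub.
  by rewrite -[B]trmxK -trmx_mul H trmx0.
apply/row_subP => i; apply: (b_lem NR).
by rewrite -row_mul mulmx_ker row0.
Qed.

Lemma bwd (A B : 'M[R]_N) : (B == kermx A^T)%MS -> forall x,
  dotv x x = dotv (orthproj A x) (orthproj A x) + dotv (orthproj B x) (orthproj B x).
Proof.
move=> /andP [/sub_kermxP BA KB] x.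
set a := orthproj A x; set r := x - a.
have Hr : r *m A^T = 0 by apply: orthproj_res.
have rB : (r <= B)%MS.
  by apply: submx_trans KB; apply/sub_kermxP.
have aB : a *m B^T = 0.
  have : (a <= A)%MS by apply: orthproj_sub.
  case/submxP => D ->.
  by rewrite -mulmxA -[A]trmxK -trmx_mul BA trmx0 mulmx0.
have xar : x = a + r by rewrite /r addrC subrK.
have -> : orthproj B x = r.
  by rewrite {1}xar orthprojD (orthproj_ortho0 aB) (orthproj_in rB) add0r.
have ar : dotv a r = 0.
  by rewrite dotvC; apply: (dot_ortho Hr); apply: orthproj_sub.
move: xar ar; clearbody r a => xar ar.
by rewrite {1 2}xar dotvDl !dotvDr ar (dotvC r a) ar !addr0 add0r.
Qed.

End Main.

Theorem mainTheorem2 (R : realType) (N : nat) (W1 W2 : 'M[R]_N) :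
  proper_subspace W1 -> proper_subspace W2 ->
  (norm_retrieval (fun i : bool => if i then W1 else W2) <->
   (W2 == orthcomp W1)%MS).
Proof.
rewrite /proper_subspace /orthcomp => p1 p2; split.
  move=> NR; apply: fwd => // x y h1 h2.
  apply: normv_eqE; apply: NR => -[]; exact: normv_eq.
move=> H x y Hi; apply: normv_eq.
rewrite (bwd H x) (bwd H y).
by rewrite (normv_eqE (Hi true)) (normv_eqE (Hi false)).
Qed.
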